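(* Let $R$ be a commutative ring and $S$ a multiplicative subset of $R$. If $R$ is a $u$-$S$-coherent ring with respect to some $s\in S$, then the localization $R_s=R[1/s]$ is a coherent ring.
   Context: An $R$-module $M$ is $u$-$S$-finitely presented with respect to $s\in S$ if there is an exact sequence $0\to T_1\to F\to M\to T_2\to 0$ with $F$ finitely presented and $sT_1=sT_2=0$. $R$ is a $u$-$S$-coherent ring with respect to $s\in S$ if every finitely generated ideal of $R$ is $u$-$S$-finitely presented with respect to $s$. *)

(* Defs.v *)
From HB Require Import structures.
From mathcomp Require Import all_boot all_order all_algebra.
Set Implicit Arguments. Unset Strict Implicit. Unset Printing Implicit Defensive.
Import GRing.Theory.
Local Open Scope ring_scope.

Section Defs.
Variable R : comPzRingType.

Definition mult_subset (S : R -> Prop) : Prop :=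
  S 1 /\ forall a b, S a -> S b -> S (a * b).

Definition ideal_gen (xs : seq R) : R -> Prop :=
  fun x => exists c : 'I_(size xs) -> R, x = \sum_(i < size xs) c i * xs`_i.

(* A submodule P of an R-module V (the module M "is" P) is finitely
   presented: there is an exact sequence R^m --a--> R^n --p--> M --> 0
   (p realised as a map into the ambient V with image exactly P). *)
Definition fin_presented_sub (V : lmodType R) (P : V -> Prop) : Prop :=
  exists (m n : nat) (a : {linear 'rV[R]_m -> 'rV[R]_n})
         (p : {linear 'rV[R]_n -> V}),
    (forall v, P (p v)) /\ (forall x, P x -> exists v, p v = x) /\
    (forall v, p v = 0 <-> exists u, a u = v).

Definition fin_presented (F : lmodType R) : Prop :=
  fin_presented_sub (fun _ : F => True).

(* Linear maps out of the submodule P of V (P seen as a module). *)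
Definition sublinear (V : lmodType R) (P : V -> Prop) (W : lmodType R)
    (h : {x : V | P x} -> W) : Prop :=
  forall (a : R) (x y z : {x : V | P x}),
    proj1_sig z = a *: proj1_sig x + proj1_sig y -> h z = a *: h x + h y.

(* The module M (= submodule P of V) is u-S-finitely presented with respect
   to s: there is an exact sequence 0 -> T1 -f-> F -g-> M -h-> T2 -> 0 with
   F finitely presented and s T1 = s T2 = 0. *)
Definition uS_fin_presented_sub (s : R) (V : lmodType R) (P : V -> Prop)
    : Prop :=
  exists (F T1 T2 : lmodType R) (f : {linear T1 -> F}) (g : {linear F -> V})
         (h : {x : V | P x} -> T2),
    fin_presented F /\
    sublinear h /\
    injective f /\
    (forall y, P (g y)) /\
    (forall y, g y = 0 <-> exists t, f t = y) /\
    (forall z, h z = 0 <-> exists y, g y = proj1_sig z) /\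
    (forall t, exists z, h z = t) /\
    (forall t : T1, s *: t = 0) /\
    (forall t : T2, s *: t = 0).

Definition uS_coherent (s : R) : Prop :=
  forall xs : seq R, uS_fin_presented_sub s (ideal_gen xs : R^o -> Prop).

Definition coherent : Prop :=
  forall xs : seq R, fin_presented_sub (ideal_gen xs : R^o -> Prop).

End Defs.

(* phi : R -> A exhibits A as the localization R[1/s]
   (characteristic conditions, as in Mathlib's IsLocalization.Away). *)
Definition is_localization_away (R A : comPzRingType) (s : R)
    (phi : {rmorphism R -> A}) : Prop :=
  [/\ exists b : A, phi s * b = 1,
      forall a : A, exists (r : R) (n : nat), a * phi s ^+ n = phi r &
      forall r : R, phi r = 0 -> exists n : nat, s ^+ n * r = 0].

(* Main.v *)
Require Import Defs.
From HB Require Import structures.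
From mathcomp Require Import all_boot all_order all_algebra.
From mathcomp Require Import ring.
Set Implicit Arguments. Unset Strict Implicit. Unset Printing Implicit Defensive.
Import GRing.Theory.
Local Open Scope ring_scope.

Definition pmap (A : comPzRingType) n (Q : 'cV[A]_n) : 'rV[A]_n -> A^o :=
  fun v => (v *m Q) 0 0.
Fact pmap_lin (A : comPzRingType) n (Q : 'cV[A]_n) : linear (pmap Q).
Proof. by move=> a u v; rewrite /pmap mulmxDl -scalemxAl !mxE. Qed.
HB.instance Definition _ (A : comPzRingType) n (Q : 'cV[A]_n) :=
  GRing.isLinear.Build A _ _ *:%R (pmap Q) (pmap_lin Q).

Definition colv (A : comPzRingType) (xs : seq A) : 'cV[A]_(size xs) :=
  \col_i xs`_i.

Lemma ideal_genE (A : comPzRingType) (xs : seq A) x :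
  ideal_gen xs x <-> exists v : 'rV_(size xs), x = pmap (colv xs) v.
Proof.
split=> [[c ->]|[v ->]].
  exists (\row_i c i); rewrite /pmap mxE; apply: eq_bigr => i _; by rewrite !mxE.
exists (fun i => v 0 i); rewrite /pmap mxE; apply: eq_bigr => i _; by rewrite !mxE.
Qed.


Lemma mx11_eq0 (A : comPzRingType) (M : 'M[A]_1) : M = 0 <-> M 0 0 = 0.
Proof.
split=> [->|H]; first by rewrite mxE.
by apply/matrixP=> i j; rewrite !ord1 H mxE.
Qed.

Lemma R_side (R : comPzRingType) (s : R) (rs : seq R) :
  uS_fin_presented_sub s (ideal_gen rs : R^o -> Prop) ->
  exists m n (Ma : 'M[R]_(m,n)) (Q : 'cV[R]_n) (C : 'M[R]_(n, size rs))
         (D : 'M[R]_(size rs, n)),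
  [/\ Q = C *m colv rs, s *: colv rs = D *m Q, Ma *m Q = 0 &
      forall v : 'rV_n, v *m Q = 0 -> exists u, u *m Ma = s *: v].
Proof.
move=> [F [T1 [T2 [f [g [h [Hfp [hlin [finj [gP [gker [hker [hsurj [sT1 sT2]]]]]]]]]]]]]].
move: Hfp => [m [n [a [p [_ [psurj pker]]]]]].
pose Q : 'cV[R]_n := \col_j (g (p (delta_mx 0 j)) : R).
have key : forall v, g (p v) = (v *m Q) 0 0.
  move=> v; rewrite {1}(row_sum_delta v) !linear_sum mxE.
  by apply: eq_bigr => j _; rewrite !linearZ mxE.
pose Ma := lin1_mx a.
have aE : forall u, a u = u *m Ma by move=> u; rewrite mul_rV_lin1.
have /fin_all_exists [V HV] : forall j, exists v : 'rV_(size rs),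
    Q j 0 = pmap (colv rs) v.
  move=> j; apply/ideal_genE; rewrite mxE; exact: gP.
have F2 : forall x : R, ideal_gen rs x -> exists v : 'rV_n, s * x = (v *m Q) 0 0.
  move=> x Hx.
  have H0 : ideal_gen rs (0 : R^o) by apply/ideal_genE; exists 0; rewrite /pmap mul0mx mxE.
  have Hsx : ideal_gen rs (s * x : R^o).
    move/ideal_genE: Hx => [v ->]; apply/ideal_genE; exists (s *: v).
    by rewrite /pmap -scalemxAl [in RHS]mxE.
  pose z := exist (fun x : R^o => ideal_gen rs x) x Hx.
  pose z0 := exist (fun x : R^o => ideal_gen rs x) 0 H0.
  pose z' := exist (fun x : R^o => ideal_gen rs x) (s * x) Hsx.
  have hz0 : h z0 = 0.
    have := hlin (-1) z0 z0 z0 => /(_ _)/= ->; last by rewrite scaleN1r addNr.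
    by rewrite scaleN1r addNr.
  have hz' : h z' = 0.
    by rewrite (hlin s z z0 z') //= ?hz0 ?addr0 ?sT2 // addr0.
  have [y gy] := (hker z').1 hz'.
  have [v pv] := psurj y I.
  by exists v; rewrite -key pv gy.
have /fin_all_exists [W HW] : forall i : 'I_(size rs), exists v : 'rV_n,
    s * rs`_i = (v *m Q) 0 0.
  move=> i; apply: F2; apply/ideal_genE; exists (delta_mx 0 i).
  rewrite /pmap mxE (bigD1 i) //= big1 ?addr0.
    by rewrite !mxE !eqxx mul1r.
  by move=> j /negbTE ji; rewrite !mxE ji andbF mul0r.
exists m, n, Ma, Q, (\matrix_(j, i) V j 0 i), (\matrix_(i, j) W i 0 j); split.
- apply/matrixP=> j k; rewrite !ord1 HV /pmap !mxE; apply: eq_bigr => i _.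
  by rewrite !mxE.
- apply/matrixP=> i k; rewrite !ord1 !mxE HW mxE; apply: eq_bigr => j _.
  by rewrite !mxE.
- apply/matrixP=> i k; rewrite !ord1.
  have : row i (Ma *m Q) = 0.
    apply/mx11_eq0; rewrite rowE mulmxA -aE -key.
    by rewrite ((pker _).2 (ex_intro _ _ erefl)) linear0.
  by move/rowP/(_ 0); rewrite !mxE.
- move=> v /mx11_eq0; rewrite -key => /gker [t ft].
  have : p (s *: v) = 0 by rewrite linearZ -ft -linearZ sT1 linear0.
  by move/pker=> [u au]; exists u; rewrite -aE.
Qed.

Lemma ideal_gen_map (A R : comPzRingType) (F : R -> A) (rs : seq R) (x : A) :
  ideal_gen (map F rs) x <->
  exists v : 'rV_(size rs), x = pmap (\col_i F rs`_i) v.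
Proof.
rewrite /ideal_gen.
have e := size_map F rs.
move: (size (map F rs)) e => k e; subst k.
split=> [[c ->]|[v ->]].
  exists (\row_i c i); rewrite /pmap mxE; apply: eq_bigr => i _.
  by rewrite !mxE (nth_map 0).
exists (fun i => v 0 i); rewrite /pmap mxE; apply: eq_bigr => i _.
by rewrite !mxE (nth_map 0).
Qed.

Lemma loc_seq (R A : comPzRingType) (s : R) (phi : {rmorphism R -> A}) (b : A) :
  phi s * b = 1 ->
  (forall a : A, exists (r : R) (n : nat), a * phi s ^+ n = phi r) ->
  forall ys : seq A, exists N (rs : seq R), ys = map (fun r => phi r * b ^+ N) rs.
Proof.
move=> Hb Hloc; elim=> [|y ys [N [rs ->]]]; first by exists 0%N, [::].
have [r [k Hk]] := Hloc y.
have sbK : forall e, phi s ^+ e * b ^+ e = 1.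
  by move=> e; rewrite -exprMn Hb expr1n.
have yE : y = phi r * b ^+ k.
  by rewrite -Hk -[LHS]mulr1 -(sbK k) mulrA.
exists (N + k)%N, (r * s ^+ N :: map (fun x => x * s ^+ k) rs) => /=.
congr (_ :: _).
  rewrite yE rmorphM rmorphXn exprD.
  transitivity (phi r * b ^+ k * (phi s ^+ N * b ^+ N)); first by rewrite sbK mulr1.
  ring.
rewrite -map_comp; apply: eq_map => x /=.
rewrite rmorphM rmorphXn exprD.
transitivity (phi x * b ^+ N * (phi s ^+ k * b ^+ k)); first by rewrite sbK mulr1.
ring.
Qed.

Lemma loc_vec (R A : comPzRingType) (s : R) (phi : {rmorphism R -> A}) (b : A) :
  phi s * b = 1 ->
  (forall a : A, exists (r : R) (n : nat), a * phi s ^+ n = phi r) ->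
  forall n (w : 'rV[A]_n), exists (t : 'rV[R]_n) (K : nat),
    w = b ^+ K *: map_mx phi t.
Proof.
move=> Hb Hloc n w.
have sbK : forall e, phi s ^+ e * b ^+ e = 1.
  by move=> e; rewrite -exprMn Hb expr1n.
have /fin_all_exists [r Hr] : forall j : 'I_n, exists r : R,
    exists k, w 0 j * phi s ^+ k = phi r by move=> j; exact: Hloc.
have /fin_all_exists [k Hk] := Hr.
pose K := (\max_j k j)%N.
exists (\row_j (r j * s ^+ (K - k j))), K.
apply/rowP=> j; rewrite !mxE rmorphM rmorphXn -Hk.
have le : (k j <= K)%N by apply: leq_bigmax.
have := subnK le; move: (K - k j)%N => e eK; rewrite -eK exprD.
transitivity (w 0 j * (phi s ^+ e * b ^+ e) * (phi s ^+ k j * b ^+ k j)).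
  by rewrite !sbK !mulr1.
ring.
Qed.

Theorem proposition3p14 (R : comPzRingType) (S : R -> Prop) (s : R) :
  mult_subset S -> S s -> uS_coherent s ->
  forall (A : comPzRingType) (phi : {rmorphism R -> A}),
    is_localization_away s phi -> coherent A.
Proof.
move=> _ _ Hcoh A phi [[b Hb] Hloc Hker] ys.
have sbK : forall e, phi s ^+ e * b ^+ e = 1.
  by move=> e; rewrite -exprMn Hb expr1n.
have [N [rs ->]] := loc_seq Hb Hloc ys.
have [m [n [Ma [Q [C [D [HQ HD HMQ Hk]]]]]]] := R_side (Hcoh rs).
have YE : (\col_i (phi rs`_i * b ^+ N) : 'cV[A]_(size rs))
   = b ^+ N *: map_mx phi (colv rs).
  by apply/matrixP => i j; rewrite !mxE mulrC.
exists m, n, (mulmxr (map_mx phi Ma)), (pmap (map_mx phi Q)).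
split; [|split].
- move=> w; apply/ideal_gen_map; exists (phi s ^+ N *: (w *m map_mx phi C)).
  rewrite /pmap; congr (_ 0 0).
  rewrite YE HQ map_mxM mulmxA -scalemxAl -scalemxAr scalerA sbK scale1r.
  by [].
- move=> x /ideal_gen_map [v ->]; exists (b ^+ N.+1 *: (v *m map_mx phi D)).
  rewrite /pmap; congr (_ 0 0).
  have DQ : map_mx phi D *m map_mx phi Q = phi s *: map_mx phi (colv rs).
    by rewrite -map_mxM -HD map_mxZ.
  rewrite YE -scalemxAl -mulmxA DQ -!scalemxAr scalerA.
  by rewrite exprS mulrC mulrA Hb mul1r.
- move=> w; split.
  + rewrite /pmap => /mx11_eq0 H.
    have [t [K wE]] := loc_vec Hb Hloc w.
    have : map_mx phi (t *m Q) = 0.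
      have : phi s ^+ K *: (w *m map_mx phi Q) = 0 by rewrite H scaler0.
      by rewrite wE -scalemxAl scalerA sbK scale1r map_mxM.
    move/mx11_eq0; rewrite mxE => /Hker [e He].
    have : (s ^+ e *: t) *m Q = 0 by apply/mx11_eq0; rewrite -scalemxAl mxE He.
    move/Hk => [u Hu].
    exists (b ^+ (K + e.+1) *: map_mx phi u) => /=.
    rewrite -scalemxAl -map_mxM Hu !map_mxZ !scalerA wE; congr (_ *: _).
    rewrite rmorphXn.
    transitivity (b ^+ K * (phi s ^+ e.+1 * b ^+ e.+1)); last by rewrite sbK mulr1.
    by rewrite exprD -mulrA -exprS -mulrA [b ^+ e.+1 * _]mulrC.
  + move=> [u <-]; change ((u *m map_mx phi Ma *m map_mx phi Q) 0 0 = 0); rewrite -mulmxA -map_mxM HMQ map_mx0 mulmx0 mxE //.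
Qed.
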